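(* Let $(S,\Delta,\mathbb{P})$ be a probability space, $(U,d)$ a separable metric space, $\mathfrak{X}$ the set of $U$-valued random variables on $S$, $\mathcal{I}$ an ideal on $\mathbb{N}$ with $\mathbb{N}\notin\mathcal{I}$, $r\geq 0$, and $\{X_n\}_{n\in\mathbb{N}}$ a sequence in $\mathfrak{X}$. Then the set $\mathcal{I}^{\mathbb{P}}\text{-}LIM^rX_i$ is bounded in $(\mathfrak{X}^0,\rho)$ and its $\rho$-diameter is at most $\min\{1,2r\}$. Moreover, this bound cannot be reduced in general: for every $r$ with $0<2r<1$ there exist a probability space and a sequence of real-valued random variables (with $U=\mathbb{R}$ and the usual metric) such that, for the ideal $\mathcal{I}_{1/n}=\{A\subseteq\mathbb{N}:\sum_{n\in A}\frac1n<\infty\}$, the set $\mathcal{I}_{1/n}^{\mathbb{P}}\text{-}LIM^rX_i$ has $\rho$-diameter exactly $2r$.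
   Context: The Ky Fan metric is $\rho(X,Y)=\inf\{\varepsilon>0:\mathbb{P}(d(X,Y)>\varepsilon)\leq\varepsilon\}$; $\mathfrak{X}^0$ is the set of equivalence classes of $\mathfrak{X}$ under almost sure equality, on which $\rho$ is a metric. An ideal on $\mathbb{N}$ is a family $\mathcal{I}\subseteq\mathcal{P}(\mathbb{N})$ with $\varnothing\in\mathcal{I}$, closed under finite unions and under subsets. A sequence $\{X_n\}$ in $\mathfrak{X}$ is rough $\mathcal{I}$-convergent in probability to $X_*\in\mathfrak{X}$ with degree of roughness $r$ if $\{n\in\mathbb{N}:\mathbb{P}(d(X_n,X_* )>r+\varepsilon)>\delta\}\in\mathcal{I}$ for every $\varepsilon,\delta>0$; $\mathcal{I}^{\mathbb{P}}\text{-}LIM^rX_i$ denotes the set of all such $X_*$ (regarded as a subset of $\mathfrak{X}^0$). *)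

(* Defs.v *)
From HB Require Import structures.
From mathcomp Require Import all_boot all_order all_algebra.
From mathcomp Require Import all_classical all_reals all_analysis.
Set Implicit Arguments. Unset Strict Implicit. Unset Printing Implicit Defensive.
Import Order.TTheory GRing.Theory Num.Theory.
Local Open Scope classical_set_scope.
Local Open Scope ring_scope.

Section Defs.
Context {R : realType}.

Definition is_metric (U : Type) (dist : U -> U -> R) : Prop :=
  forall x y z : U,
    0 <= dist x y /\ (dist x y = 0 <-> x = y) /\ dist x y = dist y x /\
    dist x z <= dist x y + dist y z.

Definition d_open (U : Type) (dist : U -> U -> R) (O : set U) : Prop :=
  forall x, O x -> exists2 e : R, 0 < e & forall y, dist x y < e -> O y.

Definition separable (U : Type) (dist : U -> U -> R) : Prop :=
  exists D : set U, countable D /\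
    forall x (e : R), 0 < e -> exists y, D y /\ dist x y < e.

Definition U_rand_var d (S : measurableType d) (U : Type)
    (dist : U -> U -> R) (X : S -> U) : Prop :=
  forall O : set U, d_open dist O -> measurable (X @^-1` O).

Definition ky_fan d (S : measurableType d) (P : probability S R) (U : Type)
    (dist : U -> U -> R) (X Y : S -> U) : R :=
  inf [set e : R | 0 < e /\
         (P [set s | (e < dist (X s) (Y s))%R] <= e%:E)%E].

Definition is_ideal (I : set (set nat)) : Prop :=
  I set0 /\ (forall A B, I A -> I B -> I (A `|` B)) /\
  (forall A B, B `<=` A -> I A -> I B).

Definition rough_I_lim d (S : measurableType d) (P : probability S R)
    (U : Type) (dist : U -> U -> R) (I : set (set nat)) (r : R)
    (X : nat -> S -> U) : set (S -> U) :=
  [set Xs | U_rand_var dist Xs /\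
     forall eps delta : R, 0 < eps -> 0 < delta ->
       I [set n | (delta%:E < P [set s | (r + eps < dist (X n s) (Xs s))%R])%E]].

Definition ky_fan_diam d (S : measurableType d) (P : probability S R)
    (U : Type) (dist : U -> U -> R) (L : set (S -> U)) : R :=
  sup [set ky_fan P dist X Y | X in L & Y in L].

(* the ideal I_{1/n}; index n : nat stands for the natural number n+1 *)
Definition I_harm : set (set nat) :=
  [set A | (\sum_(0 <= n <oo | n \in A) ((n.+1%:R : R)^-1)%:E < +oo)%E].

End Defs.

Arguments U_rand_var {R d S U} dist X.
Arguments ky_fan {R d S} P {U} dist X Y.
Arguments rough_I_lim {R d S} P {U} dist I r X _.
Arguments ky_fan_diam {R d S} P {U} dist L.
Arguments is_metric {R U} dist.
Arguments separable {R U} dist.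
Arguments d_open {R U} dist O.

(* Main.v *)
Require Import Defs.
From HB Require Import structures.
From mathcomp Require Import all_boot all_order all_algebra.
From mathcomp Require Import all_classical all_reals all_analysis.
From mathcomp Require Import lra.
Import Order.TTheory GRing.Theory Num.Theory.
Import numFieldNormedType.Exports.
Local Open Scope classical_set_scope.
Local Open Scope ring_scope.

Section Helpers.
Context {R : realType}.

Lemma open_ball_d (U : Type) (dist : U -> U -> R) (a : U) (e : R) :
  is_metric dist -> d_open dist [set y | dist a y < e].
Proof.
move=> hm x /= hx; exists (e - dist a x); first by rewrite subr_gt0.
move=> y hy /=; have [_ [_ [_ t]]] := hm a x y; lra.
Qed.

Lemma small_inv (x : R) : 0 < x -> exists k : nat, 4 * k.+1%:R^-1 < x.
Proof.
move=> x0; exists (Num.Def.archi_bound (4 / x)).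
set m := (Num.Def.archi_bound (4 / x)).
have h : 4 / x < m%:R by apply: archi_boundP; rewrite divr_ge0 // ltW.
have h2 : (m%:R : R) < m.+1%:R by rewrite ltr_nat.
have mpos : (0 : R) < m.+1%:R by rewrite ltr0n.
rewrite -[_ * _^-1]/(4 / m.+1%:R) ltr_pdivrMr //.
move: h; rewrite ltr_pdivrMr // => h; lra.
Qed.

Lemma meas_dist d (S : measurableType d) U (dist : U -> U -> R) (Y Z : S -> U) c :
  is_metric dist -> separable dist -> U_rand_var dist Y -> U_rand_var dist Z ->
  measurable [set s | c < dist (Y s) (Z s)].
Proof.
move=> hm [D [cD dD]] hY hZ.
pose G (a b : U) (k : nat) : set S := [set s | c + 2 * k.+1%:R^-1 < dist a b /\
   dist a (Y s) < k.+1%:R^-1 /\ dist b (Z s) < k.+1%:R^-1].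
have mG a b k : measurable (G a b k).
  have [h|h] := boolP (c + 2 * k.+1%:R^-1 < dist a b).
  - have -> : G a b k = (Y @^-1` [set y | dist a y < k.+1%:R^-1]) `&`
                        (Z @^-1` [set y | dist b y < k.+1%:R^-1]).
      by apply/seteqP; split => s /=; [case=> _ [] | case=> ? ?; split].
    by apply: measurableI; [apply: hY | apply: hZ]; exact: open_ball_d.
  - have -> : G a b k = set0.
      by apply/seteqP; split => s //= [h' _]; rewrite h' in h.
    exact: measurable0.
have -> : [set s | c < dist (Y s) (Z s)] =
   \bigcup_(i : D) \bigcup_(j : D) \bigcup_(k : nat) G (val i) (val j) k.
  apply/seteqP; split => s /=.
  - move=> hs.
    have [k hk] : exists k : nat, 4 * k.+1%:R^-1 < dist (Y s) (Z s) - c by apply: small_inv; rewrite subr_gt0.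
    have dpos : (0 : R) < k.+1%:R^-1 by rewrite invr_gt0 ltr0n.
    have [a [Da ha]] := dD (Y s) _ dpos.
    have [b [Db hb]] := dD (Z s) _ dpos.
    exists (exist _ a (mem_set Da)) => //; exists (exist _ b (mem_set Db)) => //.
    exists k => //=.
    have [_ [_ [s1 t1]]] := hm (Y s) a (Z s).
    have [_ [_ [s2 t2]]] := hm a b (Z s).
    have [_ [_ [s3 _]]] := hm b (Z s) a.
    have [_ [_ [s4 _]]] := hm (Z s) b a.
    have key : forall del : R, 4 * del < dist (Y s) (Z s) - c -> dist (Y s) a < del ->
      dist (Z s) b < del -> c + 2 * del < dist a b /\ dist a (Y s) < del /\ dist b (Z s) < del.
      by move=> del *; split; last split; lra.
    exact: key.
  - have key : forall (a b : U) (del : R), c + 2 * del < dist a b ->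
        dist a (Y s) < del -> dist b (Z s) < del -> c < dist (Y s) (Z s).
      move=> a b del h1 h2 h3.
      have [_ [_ [s1 t1]]] := hm a (Y s) b.
      have [_ [_ [s2 t2]]] := hm (Y s) (Z s) b.
      have [_ [_ [s3 _]]] := hm b (Z s) a.
      lra.
    case=> i _ [j _ [k _ [h1 [h2 h3]]]].
    exact: key h1 h2 h3.
have cDT : countable [set: D] by rewrite (eq_countable (card_setT D)).
apply: countable_bigcupT_measurable => // i.
apply: countable_bigcupT_measurable => // j.
exact: countable_bigcupT_measurable.
Qed.

End Helpers.

Section KF.
Context {R : realType} d (S : measurableType d) (P : probability S R)
  (U : Type) (dist : U -> U -> R).

Lemma kf_le (Y Z : S -> U) (e : R) : 0 < e ->
  (P [set s | (e < dist (Y s) (Z s))%R] <= e%:E)%E -> ky_fan P dist Y Z <= e.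
Proof.
move=> e0 he; rewrite /ky_fan; apply: ge_inf; last by split.
by exists 0 => x [/ltW].
Qed.

Lemma kf_ge (Y Z : S -> U) (b : R) :
  (forall e, 0 < e -> (P [set s | (e < dist (Y s) (Z s))%R] <= e%:E)%E -> b <= e) ->
  (exists e, 0 < e /\ (P [set s | (e < dist (Y s) (Z s))%R] <= e%:E)%E) ->
  b <= ky_fan P dist Y Z.
Proof.
move=> hb [e he]; apply: lb_le_inf; first by exists e.
by move=> x [x0 hx]; exact: hb.
Qed.

Lemma kf_le1 (Y Z : S -> U) :
  measurable [set s | 1 < dist (Y s) (Z s)] -> ky_fan P dist Y Z <= 1.
Proof. by move=> m; apply: kf_le => //; exact: probability_le1. Qed.

Lemma kf_key (X : nat -> S -> U) (Y Z : S -> U) (r : R) :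
  is_metric dist -> 0 <= r ->
  (forall n c, measurable [set s | c < dist (X n s) (Y s)]) ->
  (forall n c, measurable [set s | c < dist (X n s) (Z s)]) ->
  (forall c, measurable [set s | c < dist (Y s) (Z s)]) ->
  (forall eps delta : R, 0 < eps -> 0 < delta -> exists n,
     (P [set s | (r + eps < dist (X n s) (Y s))%R] <= delta%:E)%E /\
     (P [set s | (r + eps < dist (X n s) (Z s))%R] <= delta%:E)%E) ->
  ky_fan P dist Y Z <= 2 * r.
Proof.
move=> hm r0 mY mZ mYZ H; apply/ler_addgt0Pr => e e0.
have e2 : 0 < e / 2 by rewrite divr_gt0.
have [n [h1 h2]] := H _ _ e2 e2.
apply: kf_le; first lra.
have sub : [set s | 2 * r + e < dist (Y s) (Z s)] `<=`
    [set s | r + e / 2 < dist (X n s) (Y s)] `|` [set s | r + e / 2 < dist (X n s) (Z s)].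
  move=> s /= hs.
  have [_ [_ [s1 t1]]] := hm (Y s) (X n s) (Z s).
  have [_ [_ [s2 _]]] := hm (Y s) (X n s) (Y s).
  case: (boolP (r + e / 2 < dist (X n s) (Y s))) => [h|]; first by left.
  rewrite -leNgt => h; right; lra.
apply: (le_trans (le_measure _ _ _ sub)); rewrite ?inE //; first exact: measurableU.
apply: (le_trans (measureU2 _ (mY n _) (mZ n _))).
apply: (le_trans (leeD h1 h2)); rewrite -EFinD lee_fin; lra.
Qed.

End KF.

Section Main.
Context {R : realType}.

Lemma not_Iharm_T : ~ (@I_harm R) setT.
Proof.
rewrite /I_harm /= => h.
apply: (@dvg_harmonic R).
have hge0 : (0 <= \sum_(0 <= n <oo | n \in [set: nat]) (((n.+1%:R : R)^-1)%:E))%E.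
  by apply: nneseries_ge0 => n _ _; rewrite lee_fin invr_ge0 ler0n.
apply: nondecreasing_is_cvgn.
  apply: (@nondecreasing_series R harmonic xpredT 0%N).
  by move=> n _ _; exact: harmonic_ge0.
exists (fine (\sum_(0 <= n <oo | n \in [set: nat]) (((n.+1%:R : R)^-1)%:E))).
move=> y [n _ <-].
rewrite -lee_fin fineK; last by rewrite ge0_fin_numE.
have := @nneseries_lim_ge R (fun n => ((n.+1%:R : R)^-1)%:E) (fun n => n \in [set: nat]) 0%N n.
rewrite /series /= -sumEFin.
have -> : \sum_(0 <= k < n | k \in [set: nat]) ((k.+1%:R : R)^-1)%:E =
          \sum_(0 <= k < n) (harmonic k)%:E.
  by apply: eq_bigl => k; rewrite in_setT.
apply.
by move=> k _ _; rewrite lee_fin invr_ge0 ler0n.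
Qed.

Lemma metric_R : is_metric (fun x y : R => `|x - y|).
Proof.
move=> x y z; split; first exact: normr_ge0.
split; first by split => [h|->]; [apply/eqP; rewrite -subr_eq0 -normr_eq0; apply/eqP | rewrite subrr normr0].
split; first exact: distrC.
exact: ler_distD.
Qed.

Lemma separable_R : separable (fun x y : R => `|x - y|).
Proof.
exists (range (@ratr R)); split.
  exact: (sub_countable (card_image_le _ _) (countableP _)).
move=> x e e0.
have [y [bxy [q _ qy]]] := @dense_rat R (ball x e) (ex_intro _ x (ballxx x e0)) (ball_open x e).
exists y; split; first by exists q.
by move: bxy; rewrite -ball_normE.
Qed.

End Main.

Theorem theorem2p1 (R : realType) :
  (forall (d : measure_display) (S : measurableType d) (P : probability S R)
     (U : Type) (dist : U -> U -> R) (I : set (set nat)) (r : R)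
     (X : nat -> S -> U),
     is_metric dist -> separable dist ->
     is_ideal I -> ~ I setT -> 0 <= r ->
     (forall n, U_rand_var dist (X n)) ->
     (exists M : R, forall Y Z, rough_I_lim P dist I r X Y ->
        rough_I_lim P dist I r X Z -> ky_fan P dist Y Z <= M) /\
     ky_fan_diam P dist (rough_I_lim P dist I r X) <= Num.min 1 (2 * r))
  /\
  (forall r : R, 0 < 2 * r -> 2 * r < 1 ->
     exists (d : measure_display) (S : measurableType d) (P : probability S R)
       (X : nat -> S -> R),
       (forall n, U_rand_var (fun x y : R => `|x - y|) (X n)) /\
       ky_fan_diam P (fun x y : R => `|x - y|)
         (rough_I_lim P (fun x y : R => `|x - y|) (@I_harm R) r X) = 2 * r).
Proof.
split.
  move=> d S P U dist I r X hm hs [I0 [IU IS]] nIT r0 hX.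
  have mm A B c : U_rand_var dist A -> U_rand_var dist B ->
      measurable [set s | c < dist (A s) (B s)].
    by move=> hA hB; exact: meas_dist.
  have kb : forall Y Z, rough_I_lim P dist I r X Y -> rough_I_lim P dist I r X Z ->
      ky_fan P dist Y Z <= Num.min 1 (2 * r).
    move=> Y Z [hY LY] [hZ LZ]; rewrite le_min; apply/andP; split.
      by apply: kf_le1; exact: mm.
    apply: (@kf_key _ _ _ P _ dist X) => //; try (by move=> *; exact: mm).
    move=> eps delta e0 d0.
    have IAB := IU _ _ (LY eps delta e0 d0) (LZ eps delta e0 d0).
    have [n hn] : exists n, ~ ([set n | (delta%:E < P [set s | (r + eps < dist (X n s) (Y s))%R])%E]
        `|` [set n | (delta%:E < P [set s | (r + eps < dist (X n s) (Z s))%R])%E]) n.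
      apply/existsNP => hall; apply: nIT.
      suff -> : [set: nat] = [set n | (delta%:E < P [set s | (r + eps < dist (X n s) (Y s))%R])%E]
        `|` [set n | (delta%:E < P [set s | (r + eps < dist (X n s) (Z s))%R])%E] by [].
      by apply/seteqP; split => n // _; exact: hall n.
    exists n; split; rewrite leNgt; apply/negP => h; apply: hn; [left|right]; exact: h.
  split.
    exists 1 => Y Z hY hZ; have := kb Y Z hY hZ; rewrite le_min => /andP[] //.
  rewrite /ky_fan_diam.
  have [[x Ex]|E0] := pselect (exists x, [set ky_fan P dist Y Z | Y in rough_I_lim P dist I r X
      & Z in rough_I_lim P dist I r X] x).
    apply: ge_sup; first by exists x.
    by move=> y [Y LY [Z LZ <-]]; exact: kb.
  have -> : [set ky_fan P dist Y Z | Y in rough_I_lim P dist I r X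
      & Z in rough_I_lim P dist I r X] = set0.
    by apply/seteqP; split => y // Ey; apply: E0; exists y.
  rewrite sup0 le_min; apply/andP; split; lra.
move=> r r0 r1.
have cst_rv : forall c : R, U_rand_var (fun x y : R => `|x - y|) (fun _ : unit => c).
  move=> c O _; have [Oc|Oc] := pselect (O c).
    suff -> : (fun _ : unit => c) @^-1` O = setT by exact: measurableT.
    by apply/seteqP; split.
  suff -> : (fun _ : unit => c) @^-1` O = set0 by exact: measurable0.
  by apply/seteqP; split.
exists _, unit, (\d_tt : probability unit R), (fun _ _ => 0).
split; first by move=> n; exact: cst_rv.
have mm A B c : U_rand_var (fun x y : R => `|x - y|) A ->
    U_rand_var (fun x y : R => `|x - y|) B ->
    measurable [set s : unit | c < `|A s - B s|].
  move=> hA hB.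
  exact: (@meas_dist _ _ _ _ (fun x y : R => `|x - y|) A B c metric_R separable_R hA hB).
set P := (\d_tt : probability unit R).
set dist := (fun x y : R => `|x - y|).
set L := rough_I_lim P dist (@I_harm R) r (fun _ _ => 0).
have kb : forall Y Z, L Y -> L Z -> ky_fan P dist Y Z <= 2 * r.
  move=> Y Z [hY LY] [hZ LZ].
  apply: (@kf_key _ _ _ P _ dist (fun _ _ => 0)) => //; try (by move=> *; exact: mm); first exact: metric_R.
    lra.
  move=> eps delta e0 d0; exists 0%N.
  have gen : forall W : unit -> R, (forall eps delta : R, 0 < eps -> 0 < delta ->
      (@I_harm R) [set n | (delta%:E < P [set s | (r + eps < dist 0 (W s))%R])%E]) ->
      (P [set s | (r + eps < dist 0 (W s))%R] <= delta%:E)%E.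
    move=> W LW; rewrite leNgt; apply/negP => h; apply: not_Iharm_T.
    have E : [set n : nat | (delta%:E < P [set s | (r + eps < dist 0 (W s))%R])%E] = setT.
      by apply/seteqP; split => // n _; exact: h.
    move: (LW eps delta e0 d0); rewrite E. exact: id.
  by split; [exact: gen Y LY | exact: gen Z LZ].
have mem : forall c : R, `|c| = r -> L (fun _ => c).
  move=> c hc; split; first exact: cst_rv.
  move=> eps delta e0 d0.
  suff -> : [set n : nat | (delta%:E < P [set s | (r + eps < dist ((fun _ _ => 0) n s) c)%R])%E] = set0.
    by rewrite /I_harm /= eseries0 // => i _; rewrite in_set0.
  apply/seteqP; split => n //=.
  have -> : [set s : unit | (r + eps < dist 0 c)%R] = set0.
    by apply/seteqP; split => s //=; rewrite /dist sub0r normrN hc; lra.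
  by rewrite measure0 lte_fin; lra.
have r0' : 0 <= r by lra.
apply/le_anti/andP; split.
  apply: ge_sup.
    exists (ky_fan P dist (fun _ => r) (fun _ => - r)).
    exists (fun _ => r); first by apply: mem; rewrite ger0_norm.
    exists (fun _ => - r); first by apply: mem; rewrite normrN ger0_norm.
    by [].
  by move=> y [Y LY [Z LZ <-]]; exact: kb.
apply: (@le_trans _ _ (ky_fan P dist (fun _ => r) (fun _ => - r))).
  apply: kf_ge.
    move=> e e0 he; rewrite leNgt; apply/negP => h.
    have hset : [set s : unit | (e < dist r (- r))%R] = setT.
      apply/seteqP; split => s //= _; rewrite /dist opprK ger0_norm; lra.
    by move: he; rewrite hset probability_setT lee_fin; lra.
  exists 1; split => //; apply: probability_le1; exact: mm (cst_rv _) (cst_rv _).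
apply: ub_le_sup.
  exists (2 * r); by move=> y [Y LY [Z LZ <-]]; exact: kb.
exists (fun _ => r); first by apply: mem; rewrite ger0_norm.
exists (fun _ => - r); first by apply: mem; rewrite normrN ger0_norm.
by [].
Qed.
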